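(* There is $\bar\varepsilon>0$ such that the following holds for all $x_0\in\mathbb R$ and $|\varepsilon|<\bar\varepsilon$. Put $y_0=Y(x_0,\varepsilon)$ and $\delta=\Delta(x_0,\varepsilon)$, and let $$(x_1,y_1)=T_{\varepsilon,\delta}(x_0,y_0).$$ Then $$\Delta(x_1,\varepsilon)=\Delta(x_0,\varepsilon)\qquad\text{and}\qquad Y(x_1,\varepsilon)=y_1.$$
   Context: Fix integers $p$ and $q\ge1$ and put $\mu=2\pi p/q$. Let $f:\mathbb R\to\mathbb R$ be a $2\pi$-periodic real-analytic function. For real parameters $\varepsilon,\delta$ set $g(x)=-\delta-\varepsilon f(x)$ and consider the map $T_{\varepsilon,\delta}(x,y)=(x+y+\mu+g(x),\;y+g(x))$ on $\mathbb R^2$. Define ${}_nR$ and ${}_nS$ by $T^n_{\varepsilon,\delta}(x_0,y_0)=(x_0+n\mu+{}_nR,\;y_0+{}_nS)$. There exist $\bar{\bar\varepsilon},\eta>0$ and real-analytic functions $\Delta(x,\varepsilon)$ and $Y(x,\varepsilon)$, defined for $x\in\mathbb R$ and $|\varepsilon|<\bar{\bar\varepsilon}$ and vanishing at $\varepsilon=0$, such that $(\delta,y)=(\Delta(x,\varepsilon),Y(x,\varepsilon))$ is the unique solution with $|\delta|,|y|<\eta$ of ${}_qR(x,y,\varepsilon,\delta)={}_qS(x,y,\varepsilon,\delta)=0$. *)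

(* Defs.v *)
From Stdlib Require Import Reals ZArith.
From Coquelicot Require Import Coquelicot.
Open Scope R_scope.

Definition analytic1_at (f : R -> R) (a : R) : Prop :=
  exists (c : nat -> R) (r : R), 0 < r /\
    forall x, Rabs (x - a) < r ->
      ex_series (fun n => Rabs (c n) * Rabs (x - a) ^ n) /\
      f x = Series (fun n => c n * (x - a) ^ n).

Definition analytic1 (f : R -> R) : Prop := forall a, analytic1_at f a.

Definition analytic2_at (F : R -> R -> R) (a b : R) : Prop :=
  exists (c : nat -> nat -> R) (r : R), 0 < r /\
    forall x e, Rabs (x - a) < r -> Rabs (e - b) < r ->
      (forall i, ex_series (fun j => Rabs (c i j) * Rabs (x - a) ^ i * Rabs (e - b) ^ j)) /\
      ex_series (fun i => Series (fun j => Rabs (c i j) * Rabs (x - a) ^ i * Rabs (e - b) ^ j)) /\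
      F x e = Series (fun i => Series (fun j => c i j * (x - a) ^ i * (e - b) ^ j)).

Definition mu (p : Z) (q : nat) : R := 2 * PI * IZR p / INR q.

Definition gfun (f : R -> R) (eps delta : R) (x : R) : R := - delta - eps * f x.

Definition Tmap (f : R -> R) (p : Z) (q : nat) (eps delta : R) (z : R * R) : R * R :=
  let (x, y) := z in
  (x + y + mu p q + gfun f eps delta x, y + gfun f eps delta x).

Definition Titer (f : R -> R) (p : Z) (q : nat) (eps delta : R) (n : nat) (z : R * R)
  : R * R := Nat.iter n (Tmap f p q eps delta) z.

Definition nR (f : R -> R) (p : Z) (q : nat) (n : nat) (x y eps delta : R) : R :=
  fst (Titer f p q eps delta n (x, y)) - x - INR n * mu p q.

Definition nS (f : R -> R) (p : Z) (q : nat) (n : nat) (x y eps delta : R) : R :=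
  snd (Titer f p q eps delta n (x, y)) - y.

(* Main.v *)
Require Import Defs.
From Stdlib Require Import Reals ZArith Lra Lia Classical ClassicalEpsilon.
From Coquelicot Require Import Coquelicot.
Open Scope R_scope.

Lemma exR_le (a b : nat -> R) : (forall n, Rabs (a n) <= b n) -> ex_series b -> ex_series a.
Proof. intros H Hb. apply (ex_series_le a b); [exact H | exact Hb]. Qed.

Lemma exR_scal (c : R) (a : nat -> R) : ex_series a -> ex_series (fun n => c * a n).
Proof. intros H. apply (ex_series_scal_l c a H). Qed.

Lemma pow_le_aux (E s : R) (n : nat) : Rabs E <= s -> Rabs E ^ n <= s ^ n.
Proof. intros H. apply pow_incr. split; [apply Rabs_pos|exact H]. Qed.

Lemma local1 f a : analytic1_at f a -> exists s K, 0 < s /\ forall x, Rabs (x - a) < s -> Rabs (f x) <= K.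
Proof.
  intros [c [r [Hr H]]].
  exists (r/2), (Series (fun n => Rabs (c n) * Rabs (a + r/2 - a) ^ n)). split; [lra|].
  intros x Hx.
  destruct (H x ltac:(lra)) as [Hex Hf].
  destruct (H (a + r/2)) as [Hex2 _]. { replace (a + r/2 - a) with (r/2) by ring. rewrite Rabs_pos_eq; lra. }
  rewrite Hf.
  eapply Rle_trans. apply Series_Rabs.
  { eapply ex_series_ext; [|exact Hex]. intros n; simpl. rewrite Rabs_mult, RPow_abs. reflexivity. }
  apply Series_le; [|exact Hex2].
  intros n; split; [apply Rabs_pos|].
  rewrite Rabs_mult, <- RPow_abs. apply Rmult_le_compat_l; [apply Rabs_pos|].
  apply pow_le_aux. replace (a + r/2 - a) with (r/2) by ring. rewrite (Rabs_pos_eq (r/2)); lra.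
Qed.

Lemma Series0 : Series (fun _ : nat => 0) = 0.
Proof. rewrite (Series_ext _ (fun n => 0 * 1)) by (intros; ring). rewrite Series_scal_l. ring. Qed.

Lemma Series_nonneg a : (forall n, 0 <= a n) -> ex_series a -> 0 <= Series a.
Proof. intros H He. rewrite <- Series0. apply Series_le; [|exact He]. intros n; split; [lra|apply H]. Qed.

Lemma local2 F a : analytic2_at F a 0 -> (forall x, F x 0 = 0) ->
  exists s K, 0 < s /\ 0 <= K /\ forall x e, Rabs (x - a) < s -> Rabs e < s -> Rabs (F x e) <= K * Rabs e.
Proof.
  intros [c [r [Hr H]]] H0.
  set (s := r/2).
  assert (Hs : 0 < s) by (unfold s; lra).
  destruct (H (a + s) s) as [HS1 [HS2 _]].
  { replace (a + s - a) with s by ring. rewrite Rabs_pos_eq; unfold s; lra. }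
  { rewrite Rminus_0_r, Rabs_pos_eq; unfold s; lra. }
  replace (Rabs (a + s - a)) with s in HS1, HS2 by (replace (a+s-a) with s by ring; rewrite Rabs_pos_eq; lra).
  rewrite Rminus_0_r, (Rabs_pos_eq s) in HS1, HS2 by lra.
  set (M := Series (fun i => Series (fun j => Rabs (c i j) * s ^ i * s ^ j))).
  assert (HSi : forall i, 0 <= Series (fun j => Rabs (c i j) * s ^ i * s ^ j)).
  { intros i. apply Series_nonneg; [|apply HS1]. intros j.
    apply Rmult_le_pos; [apply Rmult_le_pos; [apply Rabs_pos|apply pow_le; lra]|apply pow_le; lra]. }
  assert (HM : 0 <= M) by (apply Series_nonneg; [exact HSi|exact HS2]).
  exists s, (M / s). split; [exact Hs|]. split.
  { apply Rdiv_le_0_compat; lra. }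
  intros x e Hx He.
  assert (Hx' : Rabs (x - a) < r) by (unfold s in Hx; lra).
  assert (He' : Rabs (e - 0) < r) by (rewrite Rminus_0_r; unfold s in He; lra).
  assert (H0' : Rabs (0 - 0) < r) by (rewrite Rminus_0_r, Rabs_R0; lra).
  destruct (H x e Hx' He') as [A1 [A2 A3]].
  destruct (H x 0 Hx' H0') as [B1 [B2 B3]].
  rewrite Rminus_0_r in A1, A2, A3, B1, B2, B3.
  set (X := x - a) in *.
  set (k := Rabs e / s).
  set (T := fun i j => c i j * X ^ i * e ^ j).
  set (Z := fun i j => c i j * X ^ i * 0 ^ j).
  set (D := fun i j => T i j - Z i j).
  assert (absT : forall i j, Rabs (T i j) = Rabs (c i j) * Rabs X ^ i * Rabs e ^ j).
  { intros; unfold T. rewrite !Rabs_mult, !RPow_abs. reflexivity. }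
  assert (absZ : forall i j, Rabs (Z i j) = Rabs (c i j) * Rabs X ^ i * Rabs 0 ^ j).
  { intros; unfold Z. rewrite !Rabs_mult, !RPow_abs. reflexivity. }
  assert (exT : forall i, ex_series (T i)).
  { intros i. apply ex_series_Rabs. eapply ex_series_ext; [|apply (A1 i)]. intros j; simpl; rewrite absT; reflexivity. }
  assert (exZ : forall i, ex_series (Z i)).
  { intros i. apply ex_series_Rabs. eapply ex_series_ext; [|apply (B1 i)]. intros j; simpl; rewrite absZ; reflexivity. }
  assert (exTo : ex_series (fun i => Series (T i))).
  { eapply exR_le; [|exact A2]. intros i. eapply Rle_trans. apply Series_Rabs.
    eapply ex_series_ext; [|apply (A1 i)]. intros j; simpl; rewrite absT; reflexivity.
    right. apply Series_ext. intros j; apply absT. }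
  assert (exZo : ex_series (fun i => Series (Z i))).
  { eapply exR_le; [|exact B2]. intros i. eapply Rle_trans. apply Series_Rabs.
    eapply ex_series_ext; [|apply (B1 i)]. intros j; simpl; rewrite absZ; reflexivity.
    right. apply Series_ext. intros j; apply absZ. }
  assert (Dbound : forall i j, Rabs (D i j) <= k * (Rabs (c i j) * s ^ i * s ^ j)).
  { intros i j. unfold D, T, Z, k. destruct j as [|j].
    - simpl. replace (c i 0%nat * X ^ i * 1 - c i 0%nat * X ^ i * 1) with 0 by ring.
      rewrite Rabs_R0. apply Rmult_le_pos. apply Rdiv_le_0_compat; [apply Rabs_pos|lra].
      apply Rmult_le_pos; [apply Rmult_le_pos; [apply Rabs_pos|apply pow_le; lra]|lra].
    - replace (0 ^ S j) with 0 by (simpl; ring).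
      rewrite Rmult_0_r, Rminus_0_r, !Rabs_mult, <- !RPow_abs. simpl (_ ^ S j).
      replace (Rabs e / s * (Rabs (c i (S j)) * s ^ i * (s * s ^ j)))
        with (Rabs (c i (S j)) * s ^ i * (Rabs e * s ^ j)) by (field; lra).
      apply Rmult_le_compat.
      + apply Rmult_le_pos; [apply Rabs_pos|apply pow_le, Rabs_pos].
      + apply Rmult_le_pos; [apply Rabs_pos|apply pow_le, Rabs_pos].
      + apply Rmult_le_compat_l; [apply Rabs_pos|]. apply pow_le_aux; lra.
      + apply Rmult_le_compat_l; [apply Rabs_pos|]. apply pow_le_aux; lra. }
  assert (exDa : forall i, ex_series (fun j => Rabs (D i j))).
  { intros i. eapply exR_le; [|apply (exR_scal k _ (HS1 i))]. intros j. rewrite Rabs_Rabsolu. apply Dbound. }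
  assert (Dsum : forall i, Series (fun j => Rabs (D i j)) <= k * Series (fun j => Rabs (c i j) * s ^ i * s ^ j)).
  { intros i. rewrite <- Series_scal_l. apply Series_le; [|apply (exR_scal k _ (HS1 i))].
    intros j; split; [apply Rabs_pos|apply Dbound]. }
  assert (Fe : F x e = Series (fun i => Series (D i))).
  { rewrite <- (Rminus_0_r (F x e)), <- (H0 x) at 1. rewrite A3, B3.
    fold T Z. rewrite <- Series_minus by assumption. apply Series_ext. intros i.
    unfold D. rewrite Series_minus; auto. }
  rewrite Fe.
  assert (exo : ex_series (fun i => Rabs (Series (D i)))).
  { eapply exR_le; [|apply (exR_scal k _ HS2)]. intros i. rewrite Rabs_Rabsolu.
    eapply Rle_trans; [apply Series_Rabs; apply exDa|apply Dsum]. }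
  eapply Rle_trans. apply Series_Rabs. exact exo.
  replace (M / s * Rabs e) with (k * M) by (unfold k; field; lra).
  unfold M. rewrite <- Series_scal_l. apply Series_le; [|apply (exR_scal k _ HS2)].
  intros i; split; [apply Rabs_pos|]. eapply Rle_trans; [apply Series_Rabs; apply exDa|apply Dsum].
Qed.

Section S.
Variables (f : R -> R) (p : Z) (q : nat).

Lemma Tmap_shift c e d x y : (forall x, f (x + c) = f x) ->
  Tmap f p q e d (x + c, y) = (fst (Tmap f p q e d (x, y)) + c, snd (Tmap f p q e d (x, y))).
Proof. intros H. unfold Tmap, gfun; simpl. rewrite H. f_equal; ring. Qed.

Lemma Titer_shift c e d n x y : (forall x, f (x + c) = f x) ->
  Titer f p q e d n (x + c, y) = (fst (Titer f p q e d n (x, y)) + c, snd (Titer f p q e d n (x, y))).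
Proof.
  intros H. induction n as [|n IH]; [reflexivity|].
  unfold Titer in *; simpl. rewrite IH. destruct (Nat.iter n (Tmap f p q e d) (x, y)) as [u v].
  simpl. apply Tmap_shift; exact H.
Qed.

Lemma nR_shift c e d n x y : (forall x, f (x + c) = f x) ->
  nR f p q n (x + c) y e d = nR f p q n x y e d.
Proof. intros H. unfold nR. rewrite Titer_shift by exact H. simpl. ring. Qed.

Lemma nS_shift c e d n x y : (forall x, f (x + c) = f x) ->
  nS f p q n (x + c) y e d = nS f p q n x y e d.
Proof. intros H. unfold nS. rewrite Titer_shift by exact H. simpl. ring. Qed.

Lemma Titer_comm e d n z : Titer f p q e d n (Tmap f p q e d z) = Tmap f p q e d (Titer f p q e d n z).
Proof. unfold Titer. rewrite <- Nat.iter_succ_r. reflexivity. Qed.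

End S.

Lemma per_nat (f : R -> R) : (forall x, f (x + 2 * PI) = f x) -> forall n x, f (x + 2 * PI * INR n) = f x.
Proof.
  intros H n; induction n as [|n IH]; intros x.
  - simpl. f_equal; ring.
  - rewrite S_INR. replace (x + 2 * PI * (INR n + 1)) with ((x + 2 * PI * INR n) + 2 * PI) by ring.
    rewrite H; apply IH.
Qed.

Lemma per_Z (f : R -> R) : (forall x, f (x + 2 * PI) = f x) -> forall k x, f (x + 2 * PI * IZR k) = f x.
Proof.
  intros H k x. destruct (Z_le_gt_dec 0 k) as [Hk|Hk].
  - destruct (IZN k Hk) as [n ->]. rewrite <- INR_IZR_INZ. apply per_nat; exact H.
  - assert (Hk' : (0 <= - k)%Z) by lia. destruct (IZN _ Hk') as [n Hn].
    replace k with (- Z.of_nat n)%Z by lia. rewrite opp_IZR, <- INR_IZR_INZ.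
    rewrite <- (per_nat f H n (x + 2 * PI * - INR n)). f_equal; ring.
Qed.

Theorem mainTheorem6
  (p : Z) (q : nat) (hq : (1 <= q)%nat)
  (f : R -> R)
  (hf_per : forall x, f (x + 2 * PI) = f x)
  (hf_an : analytic1 f)
  (epsbb eta : R) (hepsbb : 0 < epsbb) (heta : 0 < eta)
  (Delta Y : R -> R -> R)
  (hD_an : forall x e, Rabs e < epsbb -> analytic2_at Delta x e)
  (hY_an : forall x e, Rabs e < epsbb -> analytic2_at Y x e)
  (hD0 : forall x, Delta x 0 = 0)
  (hY0 : forall x, Y x 0 = 0)
  (hsol : forall x e, Rabs e < epsbb ->
     Rabs (Delta x e) < eta /\ Rabs (Y x e) < eta /\
     nR f p q q x (Y x e) e (Delta x e) = 0 /\
     nS f p q q x (Y x e) e (Delta x e) = 0)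
  (huniq : forall x e d y, Rabs e < epsbb -> Rabs d < eta -> Rabs y < eta ->
     nR f p q q x y e d = 0 -> nS f p q q x y e d = 0 ->
     d = Delta x e /\ y = Y x e) :
  exists epsb : R, 0 < epsb /\ epsb <= epsbb /\
    forall x0 e, Rabs e < epsb ->
      let y0 := Y x0 e in
      let delta := Delta x0 e in
      let z1 := Tmap f p q e delta (x0, y0) in
      Delta (fst z1) e = Delta x0 e /\ Y (fst z1) e = snd z1.
Proof.
  assert (Hinv : forall c x e, (forall x, f (x + c) = f x) -> Rabs e < epsbb ->
            Delta (x + c) e = Delta x e /\ Y (x + c) e = Y x e).
  { intros c x e Hc He. destruct (hsol x e He) as [h1 [h2 [h3 h4]]].
    destruct (huniq (x + c) e (Delta x e) (Y x e) He h1 h2) as [u1 u2].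
    - rewrite nR_shift by exact Hc. exact h3.
    - rewrite nS_shift by exact Hc. exact h4.
    - split; symmetry; assumption. }
  assert (Hloc : forall a, exists sK : R * R, 0 < fst sK /\ 0 <= snd sK /\
     forall x e, Rabs (x - a) < fst sK -> Rabs e < fst sK ->
       Rabs (f x) <= snd sK /\ Rabs (Delta x e) <= snd sK * Rabs e /\ Rabs (Y x e) <= snd sK * Rabs e).
  { intros a.
    assert (H0 : Rabs 0 < epsbb) by (rewrite Rabs_R0; lra).
    destruct (local1 f a (hf_an a)) as [s1 [K1 [Hs1 B1]]].
    destruct (local2 Delta a (hD_an a 0 H0) hD0) as [s2 [K2 [Hs2 [HK2 B2]]]].
    destruct (local2 Y a (hY_an a 0 H0) hY0) as [s3 [K3 [Hs3 [HK3 B3]]]].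
    exists (Rmin s1 (Rmin s2 s3), Rmax (Rabs K1) (Rmax K2 K3)); simpl.
    split; [repeat apply Rmin_pos; assumption|].
    split; [eapply Rle_trans; [apply Rabs_pos|apply Rmax_l]|].
    intros x e Hx He.
    assert (Hm1 := Rmin_l s1 (Rmin s2 s3)). assert (Hm2 := Rmin_r s1 (Rmin s2 s3)).
    assert (Hm3 := Rmin_l s2 s3). assert (Hm4 := Rmin_r s2 s3).
    assert (HM1 := Rmax_l (Rabs K1) (Rmax K2 K3)). assert (HM2 := Rmax_r (Rabs K1) (Rmax K2 K3)).
    assert (HM3 := Rmax_l K2 K3). assert (HM4 := Rmax_r K2 K3).
    assert (Hea := Rabs_pos e). assert (Hk1 := Rle_abs K1).
    split; [|split].
    - specialize (B1 x ltac:(lra)). lra.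
    - specialize (B2 x e ltac:(lra) ltac:(lra)). eapply Rle_trans; [exact B2|].
      apply Rmult_le_compat_r; lra.
    - specialize (B3 x e ltac:(lra) ltac:(lra)). eapply Rle_trans; [exact B3|].
      apply Rmult_le_compat_r; lra. }
  assert (Hsig : forall a, {sK : R * R | 0 < fst sK /\ 0 <= snd sK /\
     forall x e, Rabs (x - a) < fst sK -> Rabs e < fst sK ->
       Rabs (f x) <= snd sK /\ Rabs (Delta x e) <= snd sK * Rabs e /\ Rabs (Y x e) <= snd sK * Rabs e}).
  { intros a. apply constructive_indefinite_description. apply Hloc. }
  assert (Hdpos : forall a, 0 < Rmin (fst (proj1_sig (Hsig a))) (1 / (snd (proj1_sig (Hsig a)) + 1))).
  { intros a. destruct (proj2_sig (Hsig a)) as [h1 [h2 _]]. apply Rmin_pos; [exact h1|].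
    apply Rdiv_lt_0_compat; lra. }
  set (delta := fun a => mkposreal _ (Hdpos a)).
  destruct (compactness_value_1d 0 (2 * PI) delta) as [[d Hd] Hcomp]. simpl in Hcomp.
  assert (Unif : forall x e, 0 <= x <= 2 * PI -> Rabs e < d ->
     Rabs (f x) <= 1 / d /\ Rabs (Delta x e) <= Rabs e / d /\ Rabs (Y x e) <= Rabs e / d).
  { intros x e Hx He. specialize (Hcomp x Hx).
    apply NNPP. intros Hn. apply Hcomp. intros [t [Ht [Hxt Hdt]]]. apply Hn.
    unfold delta in Hxt, Hdt; simpl in Hxt, Hdt.
    destruct (proj2_sig (Hsig t)) as [h1 [h2 h3]].
    set (s := fst (proj1_sig (Hsig t))) in *. set (K := snd (proj1_sig (Hsig t))) in *.
    assert (Hm1 := Rmin_l s (1 / (K + 1))). assert (Hm2 := Rmin_r s (1 / (K + 1))).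
    assert (HK : K <= 1 / d).
    { assert (d <= 1 / (K + 1)) by lra.
      apply (Rmult_le_reg_r d); [lra|]. unfold Rdiv; rewrite Rmult_1_l, Rinv_l by lra.
      apply (Rmult_le_compat_l (K + 1)) in H; [|lra].
      replace ((K + 1) * (1 / (K + 1))) with 1 in H by (field; lra). nra. }
    destruct (h3 x e ltac:(lra) ltac:(lra)) as [b1 [b2 b3]].
    assert (Hea := Rabs_pos e).
    assert (K * Rabs e <= Rabs e / d).
    { unfold Rdiv. rewrite Rmult_comm. apply Rmult_le_compat_l; [lra|]. unfold Rdiv in HK; lra. }
    split; [lra|split; lra]. }
  assert (Hpi : 0 < PI) by exact PI_RGT_0.
  assert (Unif2 : forall x e, Rabs e < d -> Rabs e < epsbb ->
     Rabs (f x) <= 1 / d /\ Rabs (Delta x e) <= Rabs e / d /\ Rabs (Y x e) <= Rabs e / d).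
  { intros x e He He'.
    set (k := (up (x / (2 * PI)) - 1)%Z).
    destruct (archimed (x / (2 * PI))) as [a1 a2].
    assert (Hk : IZR k = IZR (up (x / (2 * PI))) - 1) by (unfold k; rewrite minus_IZR; reflexivity).
    set (x' := x - 2 * PI * IZR k).
    assert (Hx' : 0 <= x' <= 2 * PI).
    { unfold x'. rewrite Hk.
      assert (Hz : x = 2 * PI * (x / (2 * PI))) by (field; lra).
      split; nra. }
    assert (Hxx : x = x' + 2 * PI * IZR k) by (unfold x'; ring).
    destruct (Hinv (2 * PI * IZR k) x' e (per_Z f hf_per k) He') as [i1 i2].
    rewrite Hxx, i1, i2, (per_Z f hf_per k). apply Unif; assumption. }
  exists (Rmin epsbb (Rmin d (eta * d / 4))).
  assert (Hep : 0 < eta * d / 4) by (apply Rdiv_lt_0_compat; [apply Rmult_lt_0_compat|]; lra).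
  split; [repeat apply Rmin_pos; lra|]. split; [apply Rmin_l|].
  intros x0 e He y0 delta0 z1.
  assert (Hm1 := Rmin_l epsbb (Rmin d (eta * d / 4))). assert (Hm2 := Rmin_r epsbb (Rmin d (eta * d / 4))).
  assert (Hm3 := Rmin_l d (eta * d / 4)). assert (Hm4 := Rmin_r d (eta * d / 4)).
  assert (He1 : Rabs e < epsbb) by lra.
  assert (He2 : Rabs e < d) by lra.
  destruct (hsol x0 e He1) as [s1 [s2 [s3 s4]]].
  set (c := INR q * mu p q).
  assert (Hc : c = 2 * PI * IZR p).
  { unfold c, mu. assert (INR q <> 0) by (apply not_0_INR; lia). field; assumption. }
  assert (Hfc : forall x, f (x + c) = f x) by (intros x; rewrite Hc; apply per_Z; exact hf_per).
  assert (Hit : Titer f p q e delta0 q (x0, y0) = (x0 + c, y0)).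
  { unfold nR, nS in s3, s4. fold y0 delta0 in s3, s4.
    destruct (Titer f p q e delta0 q (x0, y0)) as [u v]. simpl in s3, s4. unfold c. f_equal; lra. }
  assert (Hit1 : Titer f p q e delta0 q (fst z1, snd z1) = (fst z1 + c, snd z1)).
  { unfold z1. replace (fst (Tmap f p q e delta0 (x0, y0)), snd (Tmap f p q e delta0 (x0, y0)))
      with (Tmap f p q e delta0 (x0, y0)) by (simpl; reflexivity).
    rewrite Titer_comm, Hit. apply Tmap_shift; exact Hfc. }
  assert (Hy1 : Rabs (snd z1) < eta).
  { destruct (Unif2 x0 e He2 He1) as [b1 [b2 b3]].
    unfold z1, Tmap, gfun; simpl. fold y0 delta0 in b2, b3.
    assert (Rabs (y0 + (- delta0 - e * f x0)) <= Rabs y0 + Rabs delta0 + Rabs e * Rabs (f x0)).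
    { eapply Rle_trans; [apply Rabs_triang|]. rewrite <- Rabs_mult.
      eapply Rle_trans; [apply Rplus_le_compat_l, Rabs_triang|]. rewrite !Rabs_Ropp. lra. }
    assert (Hea := Rabs_pos e).
    assert (Rabs e * Rabs (f x0) <= Rabs e / d).
    { replace (Rabs e / d) with (Rabs e * (1 / d)) by (field; lra). apply Rmult_le_compat_l; lra. }
    assert (Rabs e / d < eta / 4).
    { apply (Rmult_lt_reg_r d); [lra|]. unfold Rdiv. rewrite Rmult_assoc, Rinv_l by lra. lra. }
    lra. }
  destruct (huniq (fst z1) e delta0 (snd z1) He1 s1 Hy1) as [u1 u2].
  - unfold nR. rewrite Hit1. simpl. unfold c. ring.
  - unfold nS. rewrite Hit1. simpl. ring.
  - split; [symmetry; exact u1|symmetry; exact u2].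
Qed.
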